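(* Let $(G,M,\Delta)$ be a Garside structure and let $(H,N,\delta)$ be a parabolic substructure of it, with $H\neq\{1\}$. Let $T$ be the set of $(H,N)$-reduced elements of $G$. Then $T$ is a right transversal of $H$ in $G$, i.e. for every right coset $C=H\alpha$ ($\alpha\in G$) the set $C\cap T$ consists of exactly one element.
   Context: Let $G$ be a group and $M$ a submonoid with $M\cap M^{-1}=\{1\}$. Define partial orders on $G$ by $\alpha\le_L\beta$ iff $\alpha^{-1}\beta\in M$, and $\alpha\le_R\beta$ iff $\beta\alpha^{-1}\in M$. For $a\in M$ let $\mathrm{Div}_L(a)=\{b\in M: b\le_L a\}$, $\mathrm{Div}_R(a)=\{b\in M: b\le_R a\}$; $a$ is balanced if these coincide, and then $\mathrm{Div}(a)$ denotes this set. $M$ is Noetherian if each $a\in M$ admits an integer $n$ such that $a$ is not a product of more than $n$ non-trivial factors. A Garside structure $(G,M,\Delta)$ consists of such $G,M$ and a balanced $\Delta\in M$ such that: $M$ is Noetherian; $\mathrm{Div}(\Delta)$ is finite and generates $M$ as a monoid and $G$ as a group; $(G,\le_L)$ is a lattice (with meet $\wedge_L$, join $\vee_L$). A parabolic substructure is a triple $(H,N,\delta)$ where $\delta\in M$ is balanced, $H$ (resp. $N$) is the subgroup of $G$ (resp. submonoid of $M$) generated by $\mathrm{Div}(\delta)$, and $\mathrm{Div}(\delta)=\mathrm{Div}(\Delta)\cap N$. Put $\omega=\delta^{-1}\Delta\in M$. An element $a\in M$ is unmovable if $\Delta\not\le_L a$. Every $\alpha\in G$ has a unique right $\Delta$-form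 $\alpha=a\Delta^p$ with $a\in M$ unmovable and $p\in\mathbb Z$. An element $a\in M$ is $N$-reduced if $a\wedge_L\delta=1$ (equivalently, the only $b\in N$ with $b\le_L a$ is $b=1$). An element $\alpha\in G$ with right $\Delta$-form $a\Delta^p$ is $(H,N)$-reduced if $a$ is $N$-reduced and either $p=0$, or $p<0$ and $\omega\not\le_L a$. *)

(* Defs.v *)
From Stdlib Require Import ZArith List.
Import ListNotations.
Set Implicit Arguments.

Record group := Group {
  carrier :> Type;
  mul : carrier -> carrier -> carrier;
  inv : carrier -> carrier;
  one : carrier;
  mulA : forall x y z, mul x (mul y z) = mul (mul x y) z;
  mul1g : forall x, mul one x = x;
  mulg1 : forall x, mul x one = x;
  mulVg : forall x, mul (inv x) x = one;
  mulgV : forall x, mul x (inv x) = one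
}.

Section Garside.
Variable G : group.
Local Notation "x * y" := (mul G x y).
Local Notation "1" := (one G).

Fixpoint npow (x : G) (n : nat) : G :=
  match n with O => 1 | S n => x * npow x n end.
Definition zpow (x : G) (p : Z) : G :=
  match p with
  | Z0 => 1
  | Zpos q => npow x (Pos.to_nat q)
  | Zneg q => inv G (npow x (Pos.to_nat q))
  end.

Definition prodl (l : list G) : G := fold_right (fun x y => x * y) 1 l.

Definition is_submonoid (M : G -> Prop) : Prop :=
  M 1 /\ (forall x y, M x -> M y -> M (x * y)).
Definition pointed (M : G -> Prop) : Prop :=
  forall x, M x -> M (inv G x) -> x = 1.

Definition leL (M : G -> Prop) (a b : G) : Prop := M (inv G a * b).
Definition leR (M : G -> Prop) (a b : G) : Prop := M (b * inv G a).

Definition DivL (M : G -> Prop) (a b : G) : Prop := M b /\ leL M b a.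
Definition DivR (M : G -> Prop) (a b : G) : Prop := M b /\ leR M b a.

Definition balanced (M : G -> Prop) (a : G) : Prop :=
  M a /\ forall b, DivL M a b <-> DivR M a b.
Definition Div (M : G -> Prop) (a : G) : G -> Prop := DivL M a.

Definition noetherian (M : G -> Prop) : Prop :=
  forall a, M a -> exists n : nat, forall l : list G,
    (forall x, In x l -> M x /\ x <> 1) -> prodl l = a -> length l <= n.

Inductive gen_monoid (S : G -> Prop) : G -> Prop :=
  | gm_base x : S x -> gen_monoid S x
  | gm_one : gen_monoid S 1
  | gm_mul x y : gen_monoid S x -> gen_monoid S y -> gen_monoid S (x * y).

Inductive gen_group (S : G -> Prop) : G -> Prop :=
  | gg_base x : S x -> gen_group S x
  | gg_one : gen_group S 1
  | gg_mul x y : gen_group S x -> gen_group S y -> gen_group S (x * y)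
  | gg_inv x : gen_group S x -> gen_group S (inv G x).

Definition finite_set (S : G -> Prop) : Prop :=
  exists l : list G, forall x, S x -> In x l.

Definition is_meet (le : G -> G -> Prop) (a b m : G) : Prop :=
  le m a /\ le m b /\ forall c, le c a -> le c b -> le c m.
Definition is_join (le : G -> G -> Prop) (a b j : G) : Prop :=
  le a j /\ le b j /\ forall c, le a c -> le b c -> le j c.
Definition lattice (le : G -> G -> Prop) : Prop :=
  forall a b, (exists m, is_meet le a b m) /\ (exists j, is_join le a b j).

Definition garside (M : G -> Prop) (Delta : G) : Prop :=
  is_submonoid M /\ pointed M /\ balanced M Delta /\
  noetherian M /\
  finite_set (Div M Delta) /\
  (forall x, M x <-> gen_monoid (Div M Delta) x) /\
  (forall x, gen_group (Div M Delta) x) /\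
  lattice (leL M).

Definition parabolic (M : G -> Prop) (Delta delta : G) : Prop :=
  balanced M delta /\
  forall b, Div M delta b <-> (Div M Delta b /\ gen_monoid (Div M delta) b).

Definition Hsub (M : G -> Prop) (delta : G) : G -> Prop := gen_group (Div M delta).
Definition Nsub (M : G -> Prop) (delta : G) : G -> Prop := gen_monoid (Div M delta).

Definition unmovable (M : G -> Prop) (Delta a : G) : Prop := ~ leL M Delta a.

Definition N_reduced (M : G -> Prop) (delta a : G) : Prop :=
  is_meet (leL M) a delta 1.

(* alpha = a Delta^p is the right Delta-form (unique), and the conditions hold *)
Definition HN_reduced (M : G -> Prop) (Delta delta alpha : G) : Prop :=
  exists (a : G) (p : Z),
    M a /\ unmovable M Delta a /\ alpha = a * zpow Delta p /\
    N_reduced M delta a /\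
    (p = 0%Z \/ ((p < 0)%Z /\ ~ leL M (inv G delta * Delta) a)).

End Garside.
Arguments garside {G}.
Arguments parabolic {G}.
Arguments Hsub {G}.
Arguments HN_reduced {G}.

(* Main.v *)
Require Import Defs.
From Stdlib Require Import ZArith List Lia Classical PArith.
From Corelib Require Import ssreflect.
Import ListNotations.
Set Implicit Arguments.

Section Grp.
Variable G : group.
Local Notation "x * y" := (mul G x y).
Local Notation "1" := (one G).
Local Notation inv := (inv G).

Lemma gA (x y z : G) : x * (y * z) = (x * y) * z. Proof. exact (mulA G x y z). Qed.
Lemma g1l (x : G) : 1 * x = x. Proof. exact (mul1g G x). Qed.
Lemma g1r (x : G) : x * 1 = x. Proof. exact (mulg1 G x). Qed.
Lemma gVl (x : G) : inv x * x = 1. Proof. exact (mulVg G x). Qed.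
Lemma gVr (x : G) : x * inv x = 1. Proof. exact (mulgV G x). Qed.
Lemma gKV (x y : G) : x * (inv x * y) = y. Proof. by rewrite gA gVr g1l. Qed.
Lemma gVK (x y : G) : inv x * (x * y) = y. Proof. by rewrite gA gVl g1l. Qed.
Lemma inv_uniq (x y : G) : x * y = 1 -> inv x = y.
Proof. move=> h. by rewrite -(g1r (inv x)) -h gVK. Qed.
Lemma gInvM (x y : G) : inv (x * y) = inv y * inv x.
Proof. apply: inv_uniq. by rewrite -gA gKV gVr. Qed.
Lemma gInvK (x : G) : inv (inv x) = x.
Proof. apply: inv_uniq. exact: gVl. Qed.
Lemma gInv1 : inv 1 = 1.
Proof. apply: inv_uniq. exact: g1l. Qed.

Lemma npow_add (x : G) i j : npow G x (i + j) = npow G x i * npow G x j.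
Proof. induction i as [|i IH]; simpl. by rewrite g1l. by rewrite IH gA. Qed.
Lemma npow_comm (x : G) n : npow G x n * x = x * npow G x n.
Proof. induction n as [|n IH]; simpl. by rewrite g1l g1r. by rewrite -gA IH. Qed.
Lemma npow_Sr (x : G) n : npow G x (S n) = npow G x n * x.
Proof. simpl. by rewrite npow_comm. Qed.
Lemma prodl_app (l1 l2 : list G) : prodl G (l1 ++ l2) = prodl G l1 * prodl G l2.
Proof. induction l1 as [|c l IH]; simpl. by rewrite g1l. by rewrite IH gA. Qed.
End Grp.

Ltac gsimpl := repeat progress (rewrite ?gInvM ?gInvK ?gInv1 ?g1l ?g1r -?gA ?gKV ?gVK ?gVr ?gVl).
Ltac pfrom P H := refine (eq_ind _ P H _ _); gsimpl; try reflexivity.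

Section Main.
Variable G : group.
Variables (M : G -> Prop) (D d : G).
Hypothesis HG : garside M D.
Hypothesis HP : parabolic M D d.
Local Notation "x * y" := (mul G x y).
Local Notation "1" := (one G).
Local Notation inv := (inv G).
Local Notation le := (leL G M).
Local Notation Dd := (Div G M d).
Local Notation N := (gen_monoid G (Div G M d)).
Local Notation Hs := (gen_group G (Div G M d)).
Local Notation Nred := (N_reduced G M d).
Local Notation om := (inv d * D).

Lemma M1 : M 1. Proof. by case: HG => [[h _] _]. Qed.
Lemma MM x y : M x -> M y -> M (x * y). Proof. case: HG => [[_ h] _]. exact: h. Qed.
Lemma Mpt x : M x -> M (inv x) -> x = 1. Proof. case: HG => [_ [h _]]. exact: h. Qed.
Lemma balD : balanced G M D. Proof. by case: HG => [_ [_ [h _]]]. Qed.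
Lemma noeth : noetherian G M. Proof. by case: HG => [_ [_ [_ [h _]]]]. Qed.
Lemma Mgen x : M x <-> gen_monoid G (Div G M D) x.
Proof. by case: HG => [_ [_ [_ [_ [_ [h _]]]]]]. Qed.
Lemma Mgrp x : gen_group G (Div G M D) x.
Proof. by case: HG => [_ [_ [_ [_ [_ [_ [h _]]]]]]]. Qed.
Lemma Mlat : lattice G (leL G M).
Proof. by case: HG => [_ [_ [_ [_ [_ [_ [_ h]]]]]]]. Qed.
Lemma bald : balanced G M d. Proof. by case: HP. Qed.
Lemma Hpar b : Dd b <-> Div G M D b /\ N b. Proof. case: HP => _ h. exact: h. Qed.

Lemma le_refl x : le x x. Proof. rewrite /leL gVl. exact: M1. Qed.
Lemma le_trans x y z : le x y -> le y z -> le x z.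
Proof. rewrite /leL => h1 h2. pfrom M (MM h1 h2). Qed.
Lemma le_cancel z x y : le (z * x) (z * y) <-> le x y.
Proof. rewrite /leL. gsimpl. tauto. Qed.
Lemma le_mulr x m : M m -> le x (x * m).
Proof. rewrite /leL. by rewrite gVK. Qed.
Lemma M_le1 x : M x -> le 1 x.
Proof. rewrite /leL => h. by gsimpl. Qed.
Lemma le1_eq b : M b -> le b 1 -> b = 1.
Proof. rewrite /leL g1r => h1 h2. exact: Mpt. Qed.

Lemma divcomp a b : balanced G M a -> Div G M a b -> Div G M a (inv b * a).
Proof.
  move=> [Ma Hab] [Mb Lb].
  have hc : DivR G M a (inv b * a).
  { split. exact Lb. rewrite /leR. pfrom M Mb. }
  by apply/Hab.
Qed.
Lemma divcomp2 a b : balanced G M a -> Div G M a b -> Div G M a (a * inv b).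
Proof.
  move=> [Ma Hab] hb. have [Mb Rb] : DivR G M a b by apply/Hab.
  split. exact Rb. rewrite /leL. pfrom M Mb.
Qed.
Lemma divconj1 a b : balanced G M a -> Div G M a b -> Div G M a (inv a * (b * a)).
Proof. move=> hb h. have := divcomp hb (divcomp hb h). move=> h2. pfrom (Div G M a) h2. Qed.
Lemma divconj2 a b : balanced G M a -> Div G M a b -> Div G M a (a * (b * inv a)).
Proof. move=> hb h. have := divcomp2 hb (divcomp2 hb h). move=> h2. pfrom (Div G M a) h2. Qed.

Lemma gm_conj (S : G -> Prop) e : (forall b, S b -> S (e * (b * inv e))) ->
  forall x, gen_monoid G S x -> gen_monoid G S (e * (x * inv e)).
Proof.
  move=> hS x; elim=> [y hy| |y z _ h1 _ h2].
  - apply: gm_base. exact: hS.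
  - gsimpl. exact: gm_one.
  - have := gm_mul h1 h2. move=> h. pfrom (gen_monoid G S) h.
Qed.

Lemma conjD1 x : M x -> M (D * (x * inv D)).
Proof.
  move=> /Mgen h. apply/Mgen. apply: gm_conj h. move=> b hb. exact: divconj2 balD hb.
Qed.
Lemma conjD2 x : M x -> M (inv D * (x * D)).
Proof.
  move=> /Mgen h. apply/Mgen.
  have hS : forall b, Div G M D b -> Div G M D (inv D * (b * inv (inv D))).
  { move=> b hb. have := divconj1 balD hb. move=> h3. pfrom (Div G M D) h3. }
  have h2 := @gm_conj _ _ hS _ h. pfrom (gen_monoid G (Div G M D)) h2.
Qed.
Lemma Nconj1 x : N x -> N (d * (x * inv d)).
Proof. move=> h. apply: gm_conj h. move=> b hb. exact: (divconj2 bald hb). Qed.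
Lemma Nconj2 x : N x -> N (inv d * (x * d)).
Proof.
  move=> h.
  have hS : forall b, Dd b -> Dd (inv d * (b * inv (inv d))).
  { move=> b hb. have := divconj1 bald hb. move=> h3. pfrom (Div G M d) h3. }
  have h2 := @gm_conj _ _ hS _ h. pfrom (gen_monoid G (Div G M d)) h2.
Qed.
Lemma conjDn1 j x : M x -> M (npow G D j * (x * inv (npow G D j))).
Proof.
  elim: j x => [|j IH] x hx /=. by gsimpl.
  have := conjD1 (IH x hx). move=> h. pfrom M h.
Qed.
Lemma conjDn2 j x : M x -> M (inv (npow G D j) * (x * npow G D j)).
Proof.
  elim: j x => [|j IH] x hx /=. by gsimpl.
  have := IH _ (conjD2 hx). move=> h. pfrom M h.
Qed.
Lemma Nconjn1 j x : N x -> N (npow G d j * (x * inv (npow G d j))).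
Proof.
  elim: j x => [|j IH] x hx /=. by gsimpl.
  have := Nconj1 (IH x hx). move=> h. pfrom (gen_monoid G (Div G M d)) h.
Qed.

Lemma Dd_M b : Dd b -> M b. Proof. by case. Qed.
Lemma N_M x : N x -> M x.
Proof. elim=> [y hy| |y z _ h1 _ h2]. exact: Dd_M. exact: M1. exact: MM. Qed.
Lemma Dd_N b : Dd b -> N b. Proof. exact: gm_base. Qed.
Lemma N_H x : N x -> Hs x.
Proof. elim=> [y hy| |y z _ h1 _ h2]. exact: gg_base. exact: gg_one. exact: gg_mul. Qed.
Lemma Md : M d. Proof. by case: bald. Qed.
Lemma MD : M D. Proof. by case: balD. Qed.
Lemma d_Dd : Dd d. Proof. split. exact: Md. exact: le_refl. Qed.
Lemma d_le_D : le d D. Proof. by case: (proj1 (Hpar d) d_Dd) => [[_ h] _]. Qed.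
Lemma om_M : M om. Proof. exact: d_le_D. Qed.
Lemma npow_M j : M (npow G D j).
Proof. elim: j => [|j IH] /=. exact: M1. exact: MM MD IH. Qed.
Lemma npow_N j : N (npow G d j).
Proof. elim: j => [|j IH] /=. exact: gm_one. exact: gm_mul (Dd_N d_Dd) IH. Qed.

Lemma Dd_join b c : Dd b -> Dd c -> exists j, Dd j /\ le b j /\ le c j /\
  forall z, le b z -> le c z -> le j z.
Proof.
  move=> [Mb Lb] [Mc Lc]. case: (Mlat b c) => _ [j [h1 [h2 h3]]].
  exists j. split; last by auto.
  split. have := le_trans (M_le1 Mb) h1. rewrite /leL. by gsimpl.
  exact: h3.
Qed.
Lemma Dd_quot b c : Dd b -> Dd c -> le b c -> Dd (inv b * c).
Proof.
  move=> hb [Mc Lc] hbc. split. exact hbc.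
  apply: (le_trans (y := inv b * d)). by apply/le_cancel.
  by case: (divcomp bald hb).
Qed.

Lemma Nred_use a b : Nred a -> M b -> le b a -> le b d -> b = 1.
Proof. move=> [_ [_ h]] Mb h1 h2. apply: le1_eq Mb _. exact: h. Qed.
Lemma Nred_intro a : M a -> (forall b, M b -> le b a -> le b d -> b = 1) -> Nred a.
Proof.
  move=> Ma h. split. exact: M_le1. split. exact: M_le1 Md.
  move=> c h1 h2. case: (Mlat a d) => [[mt [m1 [m2 m3]]] _].
  have e : mt = 1.
  { apply: h _ m1 m2. have := m3 _ (M_le1 Ma) (M_le1 Md). rewrite /leL. by gsimpl. }
  rewrite -e. exact: m3.
Qed.
Lemma Nred_1 : Nred 1.
Proof. apply: Nred_intro M1 _. move=> b Mb h _. exact: le1_eq. Qed.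

Lemma gm_list x : N x -> exists l, Forall Dd l /\ prodl G l = x.
Proof.
  elim=> [y hy| |y z _ [l1 [f1 e1]] _ [l2 [f2 e2]]].
  - exists [y]. split. by constructor. simpl. by rewrite g1r.
  - by exists [].
  - exists (l1 ++ l2). split. by apply Forall_app. by rewrite prodl_app e1 e2.
Qed.
Lemma prodl_N l : Forall Dd l -> N (prodl G l).
Proof. elim=> [|c l0 hc _ IH] /=. exact: gm_one. exact: gm_mul (Dd_N hc) IH. Qed.

Lemma Klist l0 : Forall Dd l0 -> forall b a, Dd b -> M a -> Nred a ->
  le b (prodl G l0 * a) -> le b (prodl G l0) /\ N (inv b * prodl G l0).
Proof.
  elim=> [|c l hc hl IH] b a hb Ma Ha /=.
  - rewrite g1l => hle. have e := Nred_use Ha (Dd_M hb) hle (proj2 hb). subst b.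
    split. exact: le_refl. gsimpl. exact: gm_one.
  - move=> hle. have MP := N_M (prodl_N hl).
    case: (Dd_join hb hc) => j [hj [hbj [hcj hjz]]].
    have hj2 : le j (c * (prodl G l * a)).
    { apply: hjz. by rewrite gA. exact: le_mulr (MM MP Ma). }
    have he : Dd (inv c * j) := Dd_quot hc hj hcj.
    have he2 : le (inv c * j) (prodl G l * a).
    { apply/(le_cancel c). by rewrite gKV. }
    case: (IH _ _ he Ma Ha he2) => h1 h2.
    split.
    + apply: le_trans hbj _. rewrite -(@gKV G c j). by apply/le_cancel.
    + have := gm_mul (Dd_N (Dd_quot hb hj hbj)) h2. move=> h. pfrom (gen_monoid G (Div G M d)) h.
Qed.
Lemma K x b a : N x -> Dd b -> M a -> Nred a -> le b (x * a) -> le b x /\ N (inv b * x).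
Proof. move=> /gm_list [l [hl <-]]. exact: Klist. Qed.

Lemma Nsmall x a : N x -> M a -> Nred a -> le x a -> x = 1.
Proof.
  move=> /gm_list [l [hl <-]] Ma Ha. elim: hl => [|c l0 hc hl IH] /=. by [].
  move=> h. have MP := N_M (prodl_N hl).
  have e : c = 1.
  { apply: Nred_use Ha (Dd_M hc) _ (proj2 hc). apply: le_trans h. exact: le_mulr. }
  subst c. rewrite g1l in h *. by rewrite IH.
Qed.

Lemma psi_N z : N z -> M (inv om * (z * om)).
Proof. move=> hz. have := conjD2 (N_M (Nconj1 hz)). move=> h. pfrom M h. Qed.

Lemma Omega1 c m : Dd c -> M m -> le om (c * m) -> le om m.
Proof.
  move=> hc Mm hle.
  have Mpc : M (inv om * (c * om)) := psi_N (Dd_N hc).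
  case: (Mlat (inv om) (inv (inv om * (c * om)))) => _ [J [hJ1 [hJ2 hJ3]]].
  have J1 : le J 1.
  { apply: hJ3. rewrite /leL. pfrom M om_M. rewrite /leL. pfrom M Mpc. }
  have Jg : le J (inv om * m).
  { apply: hJ3. rewrite /leL. pfrom M Mm. rewrite /leL. pfrom M hle. }
  have Mb : M (inv J) by move: J1; rewrite /leL g1r.
  have Hb1 : M (om * J) by move: hJ1; rewrite /leL gInvK.
  have Hb2 : M ((inv om * (c * om)) * J) by move: hJ2; rewrite /leL gInvK.
  have Hb3 : M ((inv om * D) * J).
  { have := MM (psi_N (Dd_N (divcomp2 bald hc))) Hb2. move=> h. pfrom M h. }
  pose b' := D * (inv J * inv D).
  have Mb' : M b' := conjD1 Mb.
  have Ddb' : Dd b'.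
  { apply/(proj2 bald). split. exact Mb'. rewrite /leR /b'.
    have := conjD1 Hb3. move=> h. pfrom M h. }
  have hbd : Dd (b' * d).
  { apply/Hpar. split; last exact: gm_mul (Dd_N Ddb') (Dd_N d_Dd).
    split. exact: MM Mb' Md. rewrite /leL /b'. pfrom M Hb1. }
  have Mneg : M (inv (inv d * (b' * d))).
  { case: hbd => _. rewrite /leL => h. pfrom M h. }
  have Mpos : M (inv d * (b' * d)) := Dd_M (divconj1 bald Ddb').
  have e1 := Mpt Mpos Mneg.
  have hJ : J = inv (inv D * (d * ((inv d * (b' * d)) * (inv d * D)))).
  { rewrite /b'. by gsimpl. }
  rewrite e1 in hJ. move: hJ. gsimpl => hJ.
  move: Jg. rewrite hJ /leL. by gsimpl.
Qed.

Lemma Omega x m : N x -> M m -> le om (x * m) -> le om m.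
Proof.
  move=> hx. elim: hx m => [y hy| |y z hy h1 hz h2] m Mm.
  - exact: Omega1.
  - by rewrite g1l.
  - rewrite -gA => h. apply (h2 _ Mm). apply (h1 _ (MM (N_M hz) Mm) h).
Qed.

Lemma decomp m : M m -> exists x a, N x /\ M a /\ Nred a /\ m = x * a.
Proof.
  move=> Mm. case: (noeth Mm) => n Hn. elim: n m Mm Hn => [|n IH] m Mm Hn;
  (case: (classic (exists b, M b /\ b <> 1 /\ le b m /\ le b d)) =>
    [[b [Mb [nb [bm bd]]]] | nob];
    [ | exists 1, m; split; [exact: gm_one | split; [exact Mm | split; [|by rewrite g1l]]];
        apply: Nred_intro Mm _ => b Mb bm bd; apply: NNPP => nb; apply: nob;
        by exists b]).
  - have nm : m <> 1. { move=> e. subst m. apply: nb. exact: le1_eq. }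
    have := Hn [m]. simpl. rewrite g1r => h.
    have : S 0 <= 0. { apply: h => //. move=> x [<-|[]]. by split. } lia.
  - have Mm1 : M (inv b * m) := bm.
    case: (IH _ Mm1) => [l hl el|x [a [Nx [Ma [Ha e]]]]].
    + have : length (b :: l) <= S n.
      { apply: Hn. move=> x [<-|hx]. by split. exact: hl. simpl. rewrite el. by gsimpl. }
      simpl. lia.
    + exists (b * x), a. split. exact: gm_mul (Dd_N (conj Mb bd)) Nx.
      split. exact Ma. split. exact Ha. by rewrite -gA -e gKV.
Qed.

Lemma mulform (e x y : G) i j :
  (inv (npow G e i) * x) * (inv (npow G e j) * y) =
  inv (npow G e (j + i)) * ((npow G e j * (x * inv (npow G e j))) * y).
Proof. rewrite npow_add. by gsimpl. Qed.

Lemma InvN x : N x -> exists k z, N z /\ inv x = inv (npow G d k) * z.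
Proof.
  elim=> [b hb| |x1 y1 _ [k1 [z1 [hz1 e1]]] _ [k2 [z2 [hz2 e2]]]].
  - exists (S 0), (d * inv b). split. exact: Dd_N (divcomp2 bald hb). simpl. by gsimpl.
  - exists 0, 1. split. exact: gm_one. simpl. by gsimpl.
  - exists (k1 + k2), ((npow G d k1 * (z2 * inv (npow G d k1))) * z1). split.
    exact: gm_mul (Nconjn1 _ hz2) hz1.
    by rewrite gInvM e1 e2 mulform.
Qed.

Lemma Hform h : Hs h -> exists j x, N x /\ h = inv (npow G d j) * x.
Proof.
  elim=> [b hb| |x1 y1 _ [k1 [z1 [hz1 e1]]] _ [k2 [z2 [hz2 e2]]]|x1 _ [k [z [hz e]]]].
  - exists 0, b. split. exact: Dd_N. simpl. by gsimpl.
  - exists 0, 1. split. exact: gm_one. simpl. by gsimpl.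
  - exists (k2 + k1), ((npow G d k2 * (z1 * inv (npow G d k2))) * z2). split.
    exact: gm_mul (Nconjn1 _ hz1) hz2.
    by rewrite e1 e2 mulform.
  - case: (InvN hz) => k' [z' [hz' e']].
    exists k', (z' * npow G d k). split. exact: gm_mul hz' (npow_N k).
    rewrite e gInvM e' gInvK. by gsimpl.
Qed.

Lemma InvM x : M x -> exists m k, M m /\ inv x = m * inv (npow G D k).
Proof.
  move=> /Mgen. elim=> [b hb| |x1 y1 _ [m1 [k1 [hm1 e1]]] _ [m2 [k2 [hm2 e2]]]].
  - exists (inv b * D), (S 0). split. by case: (divcomp balD hb). simpl. by gsimpl.
  - exists 1, 0. split. exact: M1. simpl. by gsimpl.
  - exists (m2 * (inv (npow G D k2) * (m1 * npow G D k2))), (k1 + k2). split.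
    exact: MM hm2 (conjDn2 _ hm1).
    rewrite gInvM e1 e2 npow_add. by gsimpl.
Qed.

Lemma Gform a : exists m n, M m /\ a = m * inv (npow G D n).
Proof.
  elim: (Mgrp a) => [b hb| |x1 y1 _ [m1 [k1 [hm1 e1]]] _ [m2 [k2 [hm2 e2]]]|x1 _ [m [k [hm e]]]].
  - exists b, 0. split. by case: hb. simpl. by gsimpl.
  - exists 1, 0. split. exact: M1. simpl. by gsimpl.
  - exists (m1 * (inv (npow G D k1) * (m2 * npow G D k1))), (k2 + k1). split.
    exact: MM hm1 (conjDn2 _ hm2).
    rewrite e1 e2 npow_add. by gsimpl.
  - case: (InvM hm) => m' [k' [hm' e']].
    exists (npow G D k * m'), k'. split. exact: MM (npow_M k) hm'.
    rewrite e gInvM e' gInvK. by gsimpl.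
Qed.

Definition Rdata t a k := M a /\ ~ le D a /\ Nred a /\ t = a * inv (npow G D k) /\
  (k = 0 \/ ~ le om a).

Lemma H_triv : (exists h, Hs h /\ h <> 1) -> d <> 1.
Proof.
  move=> [h [hh nh]] e. apply: nh. elim: hh => [b hb| |x y _ -> _ ->|x _ ->].
  - case: hb => Mb. rewrite e. exact: le1_eq.
  - by [].
  - by gsimpl.
  - by gsimpl.
Qed.

Lemma unmov_of m x a : N x -> ~ le D m -> m = x * a -> ~ le D a.
Proof.
  move=> hx hm e hDa. apply: hm. subst m. rewrite /leL.
  have := MM (conjD2 (N_M hx)) hDa. move=> h. pfrom M h.
Qed.

Lemma existence (dne : d <> 1) n : forall m, M m ->
  exists t a k, Rdata t a k /\ Hs (t * inv (m * inv (npow G D n))).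
Proof.
  elim: n => [|n IH] m Mm.
  - case: (decomp Mm) => x [a [Nx [Ma [Ha e]]]].
    exists a, a, 0. split.
    + split. exact Ma. split.
      { move=> hDa. apply: dne. apply: Nred_use Ha Md _ (le_refl d).
        exact: le_trans d_le_D hDa. }
      split. exact Ha. split. simpl. by gsimpl. by left.
    + subst m. simpl. gsimpl. exact: gg_inv (N_H Nx).
  - case: (classic (le D m)) => hDm.
    + case: (IH _ (conjD1 (hDm : M (inv D * m)))) => t [a [k [R Ht]]].
      exists t, a, k. split. exact R. rewrite npow_Sr. pfrom (gen_group G (Div G M d)) Ht.
    + case: (decomp Mm) => x [a [Nx [Ma [Ha e]]]].
      have ua := unmov_of Nx hDm e.
      case: (classic (le om a)) => hom.
      * case: (IH _ (conjD1 (hom : M (inv om * a)))) => t [a' [k [R Ht]]].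
        exists t, a', k. split. exact R.
        have := gg_mul Ht (gg_mul (gg_base G _ _ d_Dd) (gg_inv (N_H Nx))).
        move=> h. rewrite npow_Sr e. pfrom (gen_group G (Div G M d)) h.
      * exists (a * inv (npow G D (S n))), a, (S n). split.
        { split. exact Ma. split. exact ua. split. exact Ha. split. by []. by right. }
        rewrite e. gsimpl. exact: gg_inv (N_H Nx).
Qed.

Lemma iterK j : forall x u a, N x -> M u -> M a -> Nred a ->
  npow G d j * u = x * a -> exists x1, N x1 /\ u = x1 * a.
Proof.
  elim: j => [|j IH] x u a Nx Mu Ma Ha /= E.
  - exists x. split. exact Nx. by rewrite g1l in E.
  - rewrite -gA in E. have hd : le d (x * a). { rewrite /leL -E gVK. exact: MM (N_M (npow_N j)) Mu. }
    case: (K Nx d_Dd Ma Ha hd) => _ hN.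
    apply: (IH _ _ _ hN Mu Ma Ha). by rewrite -gA -E gVK.
Qed.

Lemma U1 t a k t' a' k' j x : Rdata t a k -> Rdata t' a' k' -> k' <= k -> N x ->
  npow G d j * t' = x * t -> t' = t.
Proof.
  move=> [Ma [ua [Ha [et ct]]]] [Ma' [ua' [Ha' [et' ct']]]] hk Nx E.
  have [e ek] : exists e, k = k' + e by exists (k - k'); lia.
  subst k.
  have E2 : npow G d j * (a' * npow G D e) = x * a.
  { transitivity ((npow G d j * t') * (npow G D k' * npow G D e)).
    - rewrite et'. by gsimpl.
    - rewrite E et npow_add. by gsimpl. }
  case: (iterK _ Nx (MM Ma' (npow_M e)) Ma Ha E2) => x1 [Nx1 eu].
  case: e E2 eu ct et hk => [|e] E2 eu ct et hk.
  - simpl in eu. rewrite g1r in eu.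
    have hx1 : x1 = 1. { apply: Nsmall Nx1 Ma' Ha' _. rewrite /leL eu gVK. exact Ma. }
    rewrite hx1 g1l in eu. rewrite et et' eu. by rewrite Nat.add_0_r.
  - case: ct => [hk0|hom]; first lia.
    exfalso. apply: hom.
    have hD : le D (x1 * a).
    { rewrite /leL -eu /=. have := MM (conjD2 Ma') (npow_M e). move=> h. pfrom M h. }
    have hd : le d (x1 * a) := le_trans d_le_D hD.
    case: (K Nx1 d_Dd Ma Ha hd) => _ hN.
    apply: (Omega hN Ma). rewrite /leL. move: hD. rewrite /leL => h. pfrom M h.
Qed.

Lemma R_of_HN t : HN_reduced M D d t -> exists a k, Rdata t a k.
Proof.
  move=> [a [p [Ma [un [et [Ha hp]]]]]].
  case: hp => [ep|[hlt hom]].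
  - subst p. exists a, 0. split. exact Ma. split. exact un. split. exact Ha.
    split. rewrite et /=. by gsimpl. by left.
  - case: p et hlt => [|q|q] et hlt; try (compute in hlt; discriminate).
    exists a, (Pos.to_nat q). split. exact Ma. split. exact un. split. exact Ha.
    split. exact et. by right.
Qed.

Lemma HN_of_R t a k : Rdata t a k -> HN_reduced M D d t.
Proof.
  move=> [Ma [un [Ha [et ct]]]].
  case: k et ct => [|k] et ct.
  - exists a, 0%Z. split. exact Ma. split. exact un. split. rewrite et /=. by gsimpl.
    split. exact Ha. by left.
  - exists a, (Zneg (Pos.of_succ_nat k)). split. exact Ma. split. exact un. split.
    rewrite et /zpow SuccNat2Pos.id_succ. by [].
    split. exact Ha. right. split. by []. case: ct => [//|h]. exact h.
Qed.

End Main.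

Unset Implicit Arguments.

Theorem theorem3p3 (G : group) (M : G -> Prop) (Delta delta : G) :
  garside M Delta ->
  parabolic M Delta delta ->
  (exists h : G, Hsub M delta h /\ h <> one G) ->
  forall alpha : G,
    exists t : G,
      (HN_reduced M Delta delta t /\ Hsub M delta (mul G t (inv G alpha))) /\
      forall t' : G,
        HN_reduced M Delta delta t' -> Hsub M delta (mul G t' (inv G alpha)) ->
        t' = t.
Proof.
  move=> HG HP Hne alpha.
  have dne := H_triv HG Hne.
  case: (Gform HG alpha) => m [n [Mm ea]].
  case: (existence HG HP dne n _ Mm) => t [a [k [R Ht]]].
  rewrite -ea in Ht.
  exists t. split. split. exact: HN_of_R R. exact Ht.
  move=> t' Ht'r Ht'H.
  case: (R_of_HN Ht'r) => a' [k' R'].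
  have h1 : gen_group G (Div G M delta) (mul G t' (inv G t)).
  { have := gg_mul Ht'H (gg_inv Ht). move=> h. pfrom (gen_group G (Div G M delta)) h. }
  case: (Nat.le_ge_cases k' k) => hk.
  - case: (Hform HG HP h1) => j [x [Nx ex]].
    apply: (U1 HG HP j R R' hk Nx).
    rewrite -(@gKV G (npow G delta j) x) -ex. by gsimpl.
  - have h2 : gen_group G (Div G M delta) (mul G t (inv G t')).
    { have := gg_inv h1. move=> h. pfrom (gen_group G (Div G M delta)) h. }
    case: (Hform HG HP h2) => j [x [Nx ex]].
    symmetry. apply: (U1 HG HP j R' R hk Nx).
    rewrite -(@gKV G (npow G delta j) x) -ex. by gsimpl.
Qed.
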